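(* Let $k$ be a field, $A=kQ_A/I_A$ a monomial algebra, and $B$ the algebra obtained from $A$ by gluing a source vertex $e_1$ and a sink vertex $e_n$ of $Q_A$ (distinct, non-isolated). Then $\mathrm{Ker}(\delta^1_A)\cong\mathrm{Ker}(\delta^1_B)$ as Lie algebras, except in the case that $\mathrm{char}(k)=2$ and the gluing produces a block of $B$ isomorphic to $k[x]/(x^2)$.
   Context: Monomial algebra: $A=kQ_A/I_A$, $Q_A$ finite quiver, $I_A$ admissible, generated by a minimal set $Z_A$ of paths of length $\ge2$; $\mathcal B_A$: paths (including trivial ones) avoiding elements of $Z_A$ as subpaths. Source: no incoming arrows; sink: no outgoing arrows. Gluing: $B\subseteq A$ generated by $e_1+e_n$, the other vertex idempotents and all arrows; $B\cong kQ_B/I_B$ with $Q_B$ obtained by identifying $e_1,e_n$ (arrow $\alpha\mapsto\alpha^*$) and $I_B$ generated by the relations of $Z_A$ together with all newly formed length-2 paths through the identified vertex; $Z_B$ the resulting minimal relation set and $\mathcal B_B$ the basis paths of $B$. For path sets $X,Y$, $k(X\|Y)$ has basis the pairs $x\|y$ of parallel paths. For monomial $\Lambda=kQ/\langle Z\rangle$ with basis paths $\mathcal B$, $\delta^1:k(Q_1\|\mathcal B)\to k(Z\|\mathcal B)$, $a\|\gamma\mapsto\sum_{r\in Z}r\|r^{a\|\gamma}$, where $r^{a\|\gamma}$ is the sum over occurrences of $a$ in $r$ of the path obtained by replacing that occurrence by $\gamma$, keeping only paths in $\mathcal B$. $\mathrm{Ker}\,\delta^1$ is a Lie algebra with bracket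 $[a\|\gamma,b\|\epsilon]=b\|\epsilon^{a\|\gamma}-a\|\gamma^{b\|\epsilon}$. $\delta^1_A,\delta^1_B$ denote these for $A,B$. *)

(* Defs.v *)
From HB Require Import structures.
From mathcomp Require Import all_boot all_order all_algebra.
Set Implicit Arguments. Unset Strict Implicit. Unset Printing Implicit Defensive.
Import GRing.Theory.
Local Open Scope ring_scope.

(* A nontrivial path is a nonempty
   composable sequence of arrows, written in traversal order.  A trivial path
   e_v is represented by [::]; we only ever use trivial paths as paths parallel
   to a given nonempty path, which fixes the vertex v. *)

Definition composable (V E : finType) (s t : E -> V) (p : seq E) : bool :=
  sorted (fun a b => t a == s b) p.

Definition par (V E : finType) (s t : E -> V) (r g : seq E) : bool :=
  match r, g with
  | x :: r', y :: g' => [&& composable s t g, s y == s x & t (last y g') == t (last x r')]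
  | x :: r', [::] => s x == t (last x r')
  | [::], _ => false
  end.

(* the path g lies in the basis B = paths avoiding elements of Z as subpaths *)
Definition inB (E : finType) (Z : seq (seq E)) (g : seq E) : bool :=
  ~~ has (fun z => infix z g) Z.

(* a || g is a basis element of k(Q_1 || B) *)
Definition pb (V E : finType) (s t : E -> V) (Z : seq (seq E)) (a : E) (g : seq E) : bool :=
  par s t [:: a] g && inB Z g.

Definition monomial_rels (V E : finType) (s t : E -> V) (Z : seq (seq E)) : Prop :=
  forall z, z \in Z -> composable s t z /\ (2 <= size z)%N.
Definition minimal_rels (E : finType) (Z : seq (seq E)) : Prop :=
  forall z z', z \in Z -> z' \in Z -> infix z z' -> z = z'.
(* admissible: J^N is contained in <Z> for some N, i.e. every path of length N
   contains an element of Z as a subpath (J^2 contains <Z> since size z >= 2) *)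
Definition admissible (V E : finType) (s t : E -> V) (Z : seq (seq E)) : Prop :=
  exists N : nat, forall p : seq E, composable s t p -> size p = N ->
    has (fun z => infix z p) Z.

Definition is_source (V E : finType) (s t : E -> V) (v : V) : Prop := forall a, t a <> v.
Definition is_sink (V E : finType) (s t : E -> V) (v : V) : Prop := forall a, s a <> v.

Fixpoint allseqs (E : finType) (n : nat) : seq (seq E) :=
  match n with
  | 0 => [:: [::]]
  | n'.+1 => [::] :: [seq a :: p | a <- enum E, p <- allseqs E n']
  end.

Definition occ (E : finType) (r : seq E) (a : E) (g rho : seq E) : nat :=
  count (fun i => (nth a r i == a) && (take i r ++ g ++ drop i.+1 r == rho))
        (iota 0 (size r)).

(* Elements of k(Q_1 || B) are represented as functions f : E -> seq E -> k
   (f a g = coefficient of a||g) vanishing outside the basis pairs. *)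
Definition supported (k : fieldType) (V E : finType) (s t : E -> V) (Z : seq (seq E))
    (f : E -> seq E -> k) : Prop :=
  forall a g, ~~ pb s t Z a g -> f a g = 0.

(* coefficient of rho in  sum_{a||g} f(a||g) e^{a||g}; only g with
   size g <= size rho can contribute (e is nonempty when it matters). *)
Definition subst_coef (k : fieldType) (V E : finType) (s t : E -> V) (Z : seq (seq E))
    (f : E -> seq E -> k) (e rho : seq E) : k :=
  \sum_(a : E) \sum_(g <- allseqs E (size rho) | pb s t Z a g) f a g * (occ e a g rho)%:R.

(* delta^1(f) as a function on the basis pairs r || rho of k(Z || B):
   the coefficient of r || rho. *)
Definition delta1 (k : fieldType) (V E : finType) (s t : E -> V) (Z : seq (seq E))
    (f : E -> seq E -> k) (r rho : seq E) : k :=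
  subst_coef s t Z f r rho.

Definition kerd1 (k : fieldType) (V E : finType) (s t : E -> V) (Z : seq (seq E))
    (f : E -> seq E -> k) : Prop :=
  supported s t Z f /\
  (forall r rho, r \in Z -> par s t r rho -> inB Z rho -> delta1 s t Z f r rho = 0).

(* Lie bracket, bilinear extension of
   [a||g, b||e] = b||e^{a||g} - a||g^{b||e} *)
Definition bracket (k : fieldType) (V E : finType) (s t : E -> V) (Z : seq (seq E))
    (f h : E -> seq E -> k) : E -> seq E -> k :=
  fun c rho =>
    if pb s t Z c rho then
      \sum_(e <- allseqs E (size rho).+1 | pb s t Z c e)
        (h c e * subst_coef s t Z f e rho - f c e * subst_coef s t Z h e rho)
    else 0.

(* Lie algebra isomorphism Ker delta^1 (first) ~= Ker delta^1 (second);
   both quivers have the same arrow type E. *)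
Definition lie_iso (k : fieldType) (V1 V2 E : finType)
    (s1 t1 : E -> V1) (Z1 : seq (seq E)) (s2 t2 : E -> V2) (Z2 : seq (seq E)) : Prop :=
  exists phi : (E -> seq E -> k) -> (E -> seq E -> k),
    (forall f, kerd1 s1 t1 Z1 f -> kerd1 s2 t2 Z2 (phi f)) /\
        (forall f h, kerd1 s1 t1 Z1 f -> kerd1 s1 t1 Z1 h ->
          phi (fun a g => f a g + h a g) = (fun a g => phi f a g + phi h a g)) /\
        (forall (c : k) f, kerd1 s1 t1 Z1 f ->
          phi (fun a g => c * f a g) = (fun a g => c * phi f a g)) /\
        (forall f h, kerd1 s1 t1 Z1 f -> kerd1 s1 t1 Z1 h -> phi f = phi h -> f = h) /\
        (forall h, kerd1 s2 t2 Z2 h -> exists2 f, kerd1 s1 t1 Z1 f & phi f = h) /\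
        (forall f h, kerd1 s1 t1 Z1 f -> kerd1 s1 t1 Z1 h ->
          phi (bracket s1 t1 Z1 f h) = bracket s2 t2 Z2 (phi f) (phi h)).

(* vertices of Q_B: those of Q_A with e_n removed, e_n being identified with e_1 *)
Definition glueV (V : finType) (en : V) : finType := {v : V | v != en}.

Definition glue_map (V : finType) (e1 en : V) (H : e1 != en) (v : V) : glueV en :=
  insubd (exist (fun x => x != en) e1 H) v.

Definition minimalize (E : finType) (Z : seq (seq E)) : seq (seq E) :=
  [seq z <- undup Z | ~~ has (fun z' => (z' != z) && infix z' z) Z].

(* Z_B: minimal set of relations generating I_B, which is generated by Z_A and
   all length-2 paths a b of Q_B that are newly formed (not paths of Q_A). *)
Definition glue_rels (V E : finType) (s t : E -> V) (Z : seq (seq E))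
    (e1 en : V) (H : e1 != en) : seq (seq E) :=
  minimalize (Z ++ [seq p <- [seq [:: a; b] | a <- enum E, b <- enum E] |
     if p is [:: a; b] then (glue_map H (t a) == glue_map H (s b)) && (t a != s b)
     else false]).

(* The block (connected component) of kQ/<Z> containing the vertex v is
   isomorphic to k[x]/(x^2): the component is v with a single loop x,
   and x^2 lies in the ideal <Z>. *)
Definition dual_numbers_block (V E : finType) (s t : E -> V) (Z : seq (seq E)) (v : V) : Prop :=
  exists x : E, [/\ s x = v, t x = v,
    forall y, s y = v \/ t y = v -> y = x
  & has (fun z => infix z [:: x; x]) Z].

(* Main.v *)
Require Import Defs.
From HB Require Import structures.
From mathcomp Require Import all_boot all_order all_algebra zify.
From Stdlib Require Import FunctionalExtensionality.
Set Implicit Arguments. Unset Strict Implicit. Unset Printing Implicit Defensive.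
Import GRing.Theory.
Local Open Scope ring_scope.
Definition subst0 (k : fieldType) (E : finType) (f : E -> seq E -> k) (e rho : seq E) : k :=
  \sum_(a : E) \sum_(g <- allseqs E (size rho)) f a g * (occ e a g rho)%:R.

Lemma subst_supp (k : fieldType) (V E : finType) (s t : E -> V) (Z : seq (seq E))
  (f : E -> seq E -> k) e rho :
  supported s t Z f -> subst_coef s t Z f e rho = subst0 f e rho.
Proof.
move=> Hf; rewrite /subst_coef /subst0; apply: eq_bigr => a _.
rewrite big_mkcond; apply: eq_bigr => g _; case: ifP => // P.
by rewrite Hf ?P // mul0r.
Qed.

Lemma subst0_zero (k : fieldType) (E : finType) (f : E -> seq E -> k) e rho :
  (forall a g, g \in allseqs E (size rho) -> f a g != 0 -> occ e a g rho = 0%N) ->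
  subst0 f e rho = 0.
Proof.
move=> H; rewrite /subst0 big1 // => a _; rewrite big1_seq // => g /andP[_ gin].
case: (f a g =P 0) => [->|/eqP fn]; first by rewrite mul0r.
by rewrite H // mulr0.
Qed.

Lemma occ_size (E : finType) (r : seq E) a g rho :
  (occ r a g rho != 0)%N -> (size rho + 1 = size r + size g)%N.
Proof.
rewrite /occ -lt0n -has_count => /hasP [i]; rewrite mem_iota add0n => /andP[_ ilt].
move=> /andP[_ /eqP <-]; rewrite !size_cat size_take size_drop ilt; lia.
Qed.

Lemma occ2 (E : finType) (x y a : E) g rho :
  occ [:: x; y] a g rho = (((x == a) && (g ++ [:: y] == rho)) + ((y == a) && (x :: g == rho)))%N.
Proof. by rewrite /occ /= cats0 addn0. Qed.

Lemma occ_nil (E : finType) (e : seq E) a : (occ e a [::] [::] != 0)%N -> e = [:: a].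
Proof.
move=> H; have := occ_size H; case: e H => [|x [|y e]] //= H _.
by move: H; rewrite /occ /= addn0 andbT; case: (x =P a) => [->|].
Qed.

Lemma infix_eqsize (E : eqType) (u v : seq E) : infix u v -> size u = size v -> u = v.
Proof.
move=> /infixP [p [q ->]]; rewrite !size_cat => h.
have p0 : size p = 0%N by lia. have q0 : size q = 0%N by lia.
by move: p0 q0 {h}; case: p; case: q => //= _ _; rewrite cats0.
Qed.

Lemma sum_single (k : fieldType) (E : finType) n (F : E -> seq E -> k) a :
  (forall a' g, (a' != a) || (g != [::]) -> F a' g = 0) ->
  \sum_(a' : E) \sum_(g <- allseqs E n) F a' g = F a [::].
Proof.
move=> H; rewrite (bigD1 a) //=.
rewrite [X in _ + X]big1 ?addr0; last first.
  by move=> a' ne; rewrite big1_seq // => g _; rewrite H ?ne.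
case: n => [|n] /=; first by rewrite big_cons big_nil addr0.
rewrite big_cons big1_seq ?addr0 // => g /andP[_ /allpairsP [[x p] [_ _ ->]]].
by rewrite H // orbT.
Qed.

Lemma parcomp (V E : finType) (s t : E -> V) r g : par s t r g -> composable s t g.
Proof. by case: r g => [|x r] [|y g] //= /and3P[]. Qed.

Theorem corollary3p18 (k : fieldType) (V E : finType) (s t : E -> V)
    (Z : seq (seq E)) (e1 en : V) (Hne : e1 != en) :
  monomial_rels s t Z -> minimal_rels Z -> admissible s t Z ->
  is_source s t e1 -> is_sink s t en ->
  (exists a, s a = e1) -> (exists a, t a = en) ->
  ~ ((2%N \in [pchar k]) /\
     dual_numbers_block (fun a => glue_map Hne (s a)) (fun a => glue_map Hne (t a))
       (glue_rels s t Z Hne) (glue_map Hne e1)) ->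
  @lie_iso k V (glueV en) E s t Z
    (fun a => glue_map Hne (s a)) (fun a => glue_map Hne (t a)) (glue_rels s t Z Hne).
Proof.
move=> HZ Hmin _ Hsrc Hsnk _ _ Hexc.
have gval v : val (glue_map Hne v) = if v == en then e1 else v.
  rewrite /glue_map /insubd; case: insubP => /= [u hu ->|/negPn/eqP ->]; rewrite ?eqxx //.
  by rewrite (negPf hu).
set sB := (fun a => glue_map Hne (s a)).
set tB := (fun a => glue_map Hne (t a)).
set ZB := glue_rels s t Z Hne.
have ge1 : val (glue_map Hne e1) = e1 by rewrite gval; case: ifP.
have sBval a : val (sB a) = s a.
  by rewrite /sB gval; case: eqP => // /Hsnk.
have sBeq a b : (sB a == sB b) = (s a == s b).
  by rewrite -val_eqE /= !sBval.
have tBeq a b : (tB a == tB b) = (t a == t b).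
  rewrite -val_eqE /= !gval.
  have ne1 x : (t x == e1) = false by apply/eqP/Hsrc.
  case: (t a =P en) => ha; case: (t b =P en) => hb; rewrite ?ha ?hb ?eqxx //.
    by rewrite eq_sym ne1; apply/esym/eqP => h; apply: hb.
    by rewrite ne1; apply/esym/eqP => h; apply: ha.
have tsB a b : (tB a == sB b) = (t a == s b) || ((t a == en) && (s b == e1)).
  rewrite -val_eqE sBval /= gval.
  case: (t a =P en) => ha /=; last by rewrite orbF.
  rewrite ha; have -> : (en == s b) = false.
    by apply/eqP => h; apply: (Hsnk b); rewrite -h.
  by rewrite eq_sym.
have Hne' : (en == e1) = false by rewrite eq_sym (negPf Hne).
have ZBmem z : z \in ZB <-> z \in Z \/ exists b c, [/\ z = [:: b; c], t b = en & s c = e1].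
  rewrite /ZB /glue_rels /minimalize; set NL := (X in Z ++ X).
  have memNL y : y \in NL <-> exists b c, [/\ y = [:: b; c], t b = en & s c = e1].
    rewrite /NL mem_filter; split.
      case/andP => P /allpairsP [[b c] [_ _ /= yeq]]; subst y; move: P.
      rewrite -/(tB b) -/(sB c) tsB.
      case/andP => /orP[h|/andP[/eqP h1 /eqP h2]] h3; first by rewrite h in h3.
      by exists b, c.
    move=> [b [c [-> h1 h2]]]; apply/andP; split.
      by rewrite -/(tB b) -/(sB c) tsB h1 h2 !eqxx orbT /= Hne'.
    by apply/allpairsP; exists (b, c); rewrite !mem_enum.
  have Wsize y : y \in Z ++ NL -> (2 <= size y)%N.
    by rewrite mem_cat => /orP[/HZ[] //|/memNL [b [c [-> _ _]]]].
  rewrite mem_filter mem_undup mem_cat; split.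
    by case/andP => _ /orP[->|/memNL]; [left|right].
  move=> H; have zW : z \in Z ++ NL.
    by rewrite mem_cat; case: H => [->|/memNL ->]; rewrite ?orbT.
  rewrite -mem_cat zW andbT; apply/hasPn => z' z'W; apply/negP => /andP[nz iz].
  apply: (negP nz); apply/eqP.
  case: H => [zZ|[b [c [zeq hb hc]]]].
    move: (z'W); rewrite mem_cat => /orP[z'Z|/memNL [b [c [z'eq hb hc]]]].
      exact: Hmin.
    have := infix_sorted iz (HZ z zZ).1; rewrite z'eq /= hb hc andbT Hne' //.
  apply: (infix_eqsize iz); apply/eqP; rewrite eqn_leq size_infix // zeq /=.
  exact: Wsize z'W.
have Z_ZB z : z \in Z -> z \in ZB by move=> h; apply/ZBmem; left.
have ZB_size z : z \in ZB -> (2 <= size z)%N.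
  by case/ZBmem => [/HZ[] //|[b [c [-> _ _]]]].
have new_ZB b c : t b = en -> s c = e1 -> [:: b; c] \in ZB.
  by move=> hb hc; apply/ZBmem; right; exists b, c.
have compAB p : composable s t p -> composable sB tB p.
  by apply: sub_sorted => x y /eqP h; rewrite /sB /tB /= h.
have inB_cons (Z' : seq (seq E)) x p : inB Z' (x :: p) -> inB Z' p.
  apply: contra => /hasP[z zZ iz]; apply/hasP; exists z => //.
  by apply: infix_trans iz _; apply: infix_cons.
have compBA p : composable sB tB p -> inB ZB p -> composable s t p.
  elim: p => [|x [|y p] IH] //.
  rewrite /composable /= => /andP[hxy hp] hin; apply/andP; split; last first.
    by apply: IH => //; apply: inB_cons hin.
  move: hxy; rewrite tsB => /orP[//|/andP[/eqP h1 /eqP h2]].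
  case/negP: hin; apply/hasP; exists [:: x; y]; first exact: new_ZB.
  exact: (prefix_infix [:: x; y] p).
have inBBA g : inB ZB g -> inB Z g.
  apply: contra => /hasP[z zZ iz]; apply/hasP; exists z => //; exact: Z_ZB.
have inBAB g : composable s t g -> inB Z g -> inB ZB g.
  move=> hc hin; apply/hasPn => z zB; apply/negP => iz.
  case/ZBmem: zB => [zZ|[b [c [zeq hb hc']]]].
    by move/hasPn: hin => /(_ z zZ); rewrite iz.
  have := infix_sorted iz hc; rewrite zeq /= hb hc' andbT Hne' //.
have inB_nil : inB Z [::].
  apply/hasPn => z zZ; rewrite infixs0; apply/eqP => h; have := (HZ z zZ).2.
  by rewrite h.
have parAB r g : par s t r g -> par sB tB r g.
  case: r g => [|x r] [|y g] //=.
    by move/eqP => h; rewrite /sB /tB /= h.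
  case/and3P => hc h1 h2; apply/and3P; split. exact: (compAB (y :: g) hc). by rewrite sBeq. by rewrite tBeq.
have parBA r g : g != [::] -> par sB tB r g -> inB ZB g -> par s t r g.
  case: r g => [|x r] [|y g] //= _ /and3P[hc h1 h2] hin; apply/and3P; split.
    exact: (compBA (y :: g) hc hin).
    by rewrite -sBeq.
  by rewrite -tBeq.
have pbAB a g : pb s t Z a g -> pb sB tB ZB a g.
  rewrite /pb => /andP[hp hin]; rewrite parAB //; exact: inBAB (parcomp hp) hin.
have pbBA a g : pb sB tB ZB a g -> pb s t Z a g \/ [/\ g = [::], s a = e1 & t a = en].
  rewrite /pb; case: g => [|y g] /andP[hp hin].
    move: hp; rewrite /= eq_sym tsB => /orP[h|/andP[/eqP h1 /eqP h2]]; last by right.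
    by left; rewrite eq_sym h inB_nil.
  by left; rewrite (parBA _ _ _ hp hin) // inBBA.
have suppAB (f : E -> seq E -> k) : supported s t Z f -> supported sB tB ZB f.
  by move=> sf a g /negP npb; apply: sf; apply/negP => /pbAB.
have kerAB (f : E -> seq E -> k) : kerd1 s t Z f -> kerd1 sB tB ZB f.
  case=> sf hf; have sfB := suppAB f sf; split => // r rho rZ hp hin.
  rewrite /delta1 subst_supp //.
  case/ZBmem: rZ => [rZ|[b [c [-> hb hc]]]].
    case: rho hp hin => [|y rho] hp hin.
      apply: subst0_zero => a g gin _; apply/eqP; apply: contraT => /occ_size /= h.
      have h2 := (HZ r rZ).2; have : (size r <= 0 + 1)%N by rewrite h leq_addr.
      by rewrite add0n leqNgt h2.
    have := hf r (y :: rho) rZ (parBA r (y :: rho) isT hp hin) (inBBA _ hin).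
    by rewrite /delta1 subst_supp // => ->.

  apply: subst0_zero => a g _ fn.
  have pA : pb s t Z a g.
    by case: (boolP (pb s t Z a g)) => // /sf h; rewrite h eqxx in fn.
  have compA : composable s t rho := compBA rho (parcomp hp) hin.
  rewrite occ2; case/andP: pA; case: g fn => [|y g] fn /= hpar _.
    have hba : (b == a) = false.
      apply/eqP => ba; subst a; move/eqP: hpar; rewrite hb ; exact: (Hsnk b).
    have hca : (c == a) = false.
      apply/eqP => ca; subst a; move/eqP: hpar; rewrite hc => /esym; exact: (Hsrc c).
    by rewrite hba hca.
  have F1 : ~~ ((b == a) && (y :: g ++ [:: c] == rho)).
    apply/andP => [[/eqP ba /eqP rr]]; subst a rho; move: compA.
    rewrite /composable /= cat_path /= andbT => /andP[_ h].
    case/and3P: hpar => _ _ h'; rewrite (eqP h') hb hc in h.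
    by rewrite h in Hne'.
  have F2 : ~~ ((c == a) && (b :: y :: g == rho)).
    apply/andP => [[/eqP ca /eqP rr]]; subst a rho; move: compA.
    rewrite /composable /= => /andP[h _].
    case/and3P: hpar => _ h' _; rewrite (eqP h') hb hc in h.
    by rewrite h in Hne'.
  by rewrite (negPf F1) (negPf F2).
have inB1 x : inB ZB [:: x].
  apply/hasPn => z zB; apply/negP => /size_infix; have := ZB_size z zB.
  by case: z {zB} => [|? [|? ?]].
have kerBA (h : E -> seq E -> k) : kerd1 sB tB ZB h -> kerd1 s t Z h.
  case=> shB hh.
  have L0 a : s a = e1 -> t a = en -> h a [::] = 0.
    move=> ha1 ha2.
    have key r rho : r \in ZB -> par sB tB r rho -> inB ZB rho ->
        (forall a' g, (a' != a) || (g != [::]) -> occ r a' g rho = 0%N) ->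
        h a [::] * (occ r a [::] rho)%:R = 0.
      move=> rZ hp hin H; have := hh r rho rZ hp hin.
      rewrite /delta1 subst_supp // /subst0.
      rewrite (@sum_single _ _ _ (fun a' g => h a' g * (occ r a' g rho)%:R) a) //.
      by move=> a' g ne; rewrite H // mulr0.
    have szne (r rho g : seq E) (a' : E) : size r = (size rho).+1 -> g != [::] -> occ r a' g rho = 0%N.
      move=> hs ng; apply/eqP; case: eqP => // /eqP /occ_size; rewrite hs.
      by case: g ng => // x g _ /=; move=> H; exfalso; lia.
    case: (boolP [exists c, (s c == e1) && (c != a)]) => [/existsP [c /andP[/eqP hc ca]] | nc].
      have := key [:: a; c] [:: c] (new_ZB _ _ ha2 hc) _ (inB1 c) _.
      rewrite occ2 !eqxx (negPf ca) /= addn0 mulr1; apply.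
        by rewrite /= sBeq hc ha1 !eqxx.
      move=> a' g /orP[na|ng]; last exact: szne.
      case: g => [|x g]; last exact: szne.
      by rewrite occ2 [a == a']eq_sym (negPf na) /= eqseq_cons [a == c]eq_sym (negPf ca) /= andbF.
    case: (boolP [exists b, (t b == en) && (b != a)]) => [/existsP [b /andP[/eqP hb ba]] | nb].
      have := key [:: b; a] [:: b] (new_ZB _ _ hb ha1) _ (inB1 b) _.
      rewrite occ2 !eqxx (negPf ba) /= ?add0n ?addn0 mulr1; apply.
        by rewrite /= tBeq hb ha2 !eqxx.
      move=> a' g /orP[na|ng]; last exact: szne.
      case: g => [|x g]; last exact: szne.
      by rewrite occ2 [a == a']eq_sym (negPf na) /= eqseq_cons [a == b]eq_sym (negPf ba) /= andbF.
    have P1 : par sB tB [:: a; a] [:: a] by rewrite /= sBeq tBeq !eqxx.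
    have P2 : forall a' g, (a' != a) || (g != [::]) -> occ [:: a; a] a' g [:: a] = 0%N.
      move=> a' g /orP[na|ng]; last exact: szne.
      case: g => [|x g]; last exact: szne.
      by rewrite occ2 [a == a']eq_sym (negPf na).
    have := key _ _ (new_ZB _ _ ha2 ha1) P1 (inB1 a) P2.
    rewrite occ2 !eqxx /= => /eqP; rewrite mulf_eq0 => /orP[/eqP // | two0].
    exfalso; apply: Hexc; split.
      by rewrite inE /= two0.
    exists a; split.
    - by rewrite ha1.
    - by apply: val_inj; rewrite ge1 gval ha2 eqxx.
    - move=> y [] /(congr1 val); rewrite ge1 gval.
        case: (s y =P en) => [/Hsnk //|_ hy].
        by apply/eqP; move/existsPn: nc => /(_ y); rewrite hy eqxx /= negbK.
      case: (t y =P en) => [hy _|_ /(Hsrc y) //].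
      by apply/eqP; move/existsPn: nb => /(_ y); rewrite hy eqxx /= negbK.
    - apply/hasP; exists [:: a; a]; [exact: new_ZB | exact: infix_refl].
  have shA : supported s t Z h.
    move=> a g npA; case: (boolP (pb sB tB ZB a g)) => [pB|/shB //].
    case: (pbBA _ _ pB) => [pA|[-> h1 h2]]; [by rewrite pA in npA | exact: L0].
  split => // r rho rZ hp hin.
  rewrite /delta1 subst_supp // -(subst_supp r rho shB).
  apply: hh; [exact: Z_ZB | exact: parAB | exact: inBAB (parcomp hp) hin].
have brk (f h : E -> seq E -> k) : kerd1 s t Z f -> kerd1 s t Z h ->
    bracket s t Z f h = bracket sB tB ZB f h.
  move=> [sf _] [sh _]; have sfB := suppAB f sf; have shB := suppAB h sh.
  apply: functional_extensionality => c; apply: functional_extensionality => rho.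
  rewrite /bracket; cbv beta.
  have E1 : \sum_(e <- allseqs E (size rho).+1 | pb s t Z c e)
      (h c e * subst_coef s t Z f e rho - f c e * subst_coef s t Z h e rho) =
      \sum_(e <- allseqs E (size rho).+1) (h c e * subst0 f e rho - f c e * subst0 h e rho).
    rewrite big_mkcond; apply: eq_bigr => e _; case: ifP => P; first by rewrite !subst_supp.
    by rewrite (sf c e) ?(sh c e) ?P // !mul0r subrr.
  have E2 : \sum_(e <- allseqs E (size rho).+1 | pb sB tB ZB c e)
      (h c e * subst_coef sB tB ZB f e rho - f c e * subst_coef sB tB ZB h e rho) =
      \sum_(e <- allseqs E (size rho).+1) (h c e * subst0 f e rho - f c e * subst0 h e rho).
    rewrite big_mkcond; apply: eq_bigr => e _; case: ifP => P; first by rewrite !subst_supp.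
    by rewrite (sfB c e) ?(shB c e) ?P // !mul0r subrr.
  case: (boolP (pb s t Z c rho)) => pA; first by rewrite (pbAB _ _ pA) E1 E2.
  case: ifP => // pB; rewrite E2.
  case: (pbBA _ _ pB) => [pA'|[rho0 hc1 hc2]]; first by rewrite pA' in pA.
  subst rho; symmetry; apply: big1_seq => e _.
  have Z0 (f' h' : E -> seq E -> k) : supported s t Z f' -> supported s t Z h' ->
      h' c e * subst0 f' e [::] = 0.
    move=> sf' sh'; case: (boolP (pb s t Z c e)) => [pce|/sh' ->]; last by rewrite mul0r.
    rewrite (subst0_zero (f := f')) ?mulr0 // => a g gin fn.
    move: gin; rewrite /= inE => /eqP gn; subst g.
    have pa : pb s t Z a [::].
      by case: (boolP (pb s t Z a [::])) => // /sf' h0; rewrite h0 eqxx in fn.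
    apply/eqP; case: eqP => // /eqP /occ_nil ee; subst e.
    case/andP: pa => /= /eqP ha _; case/andP: pce => /= /andP[/eqP h1 /eqP h2] _.
    have : e1 = en by rewrite -hc1 -hc2 -h1 -h2 ha.
    by move/eqP; rewrite (negPf Hne).
  by rewrite Z0 // Z0 // subrr.
exists (fun f => f); split; first exact: kerAB.
split; first by [].
split; first by [].
split; first by [].
split; first by move=> h hB; exists h => //; exact: kerBA.
exact: brk.
Qed.
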